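(* Let $A=k[x_1][x_2;\alpha_2,\delta_2]_p\cdots[x_n;\alpha_n,\delta_n]_p$ be an iterated Poisson polynomial algebra over a field $k$ of characteristic zero, supporting a rational Poisson action of a torus $H=(k^\times)^r$ such that $x_1,\dots,x_n$ are $H$-eigenvectors. Assume there exist $\eta_1,\dots,\eta_n\in\mathfrak h=\operatorname{Lie}H$ such that $\eta_i.x_j=\alpha_i(x_j)$ for $i>j$ and the $\eta_i$-eigenvalue $s_i$ of $x_i$ is nonzero for each $i$. Then $\alpha_i\delta_i=\delta_i(\alpha_i+s_i)$ for all $i$.
   Context: If $B$ is a Poisson algebra, $\alpha$ a Poisson derivation of $B$ and $\delta$ a derivation of $B$ with $\delta(\{a,b\})=\{\delta(a),b\}+\{a,\delta(b)\}+\alpha(a)\delta(b)-\delta(a)\alpha(b)$, then $B[x;\alpha,\delta]_p$ is $B[x]$ with the unique Poisson bracket extending that of $B$ with $\{x,b\}=\alpha(b)x+\delta(b)$; an iterated Poisson polynomial algebra iterates this starting from $k[x_1]$. A rational Poisson action of $H$ is an action by Poisson automorphisms with $A$ the direct sum of $H$-eigenspaces $A_x$, $x\in X(H)\cong\mathbb Z^r$ ($(m_i)\leftrightarrow h\mapsto\prod h_i^{m_i}$). $\mathfrak h=k^r$ acts by $\eta.a=(\eta|x)a$ for $a\in A_x$ (dot product), $(\eta|x)$ being the $\eta$-eigenvalue of $a$. *)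

(* Defs.v *)
From HB Require Import structures.
From mathcomp Require Import all_boot all_order all_algebra.
From mathcomp Require Import mpoly.
Set Implicit Arguments. Unset Strict Implicit. Unset Printing Implicit Defensive.
Import Order.TTheory GRing.Theory Num.Theory.
Local Open Scope ring_scope.

Section PoissonDefs.
Variables (k : fieldType) (n : nat).
Local Notation P := {mpoly k[n]}.

(* A_i := k[x_1,...,x_i]: polynomials involving only the first i variables
   (0-indexed variables 'X_0 .. 'X_(i-1)). *)
Definition inA (i : nat) (p : P) : bool :=
  all (fun m : 'X_{1..n} => [forall j : 'I_n, (i <= j)%N ==> (m j == 0%N)]) (msupp p).

Definition poisson_bracket (br : P -> P -> P) : Prop :=
  [/\ (forall (c : k) a b d, br (c *: a + b) d = c *: br a d + br b d),
      (forall (c : k) a b d, br d (c *: a + b) = c *: br d a + br d b),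
      (forall a b, br a b = - br b a),
      (forall a b c, br a (br b c) + br b (br c a) + br c (br a b) = 0)
    & (forall a b c, br a (b * c) = br a b * c + b * br a c)].

Definition derivation_on (i : nat) (d : P -> P) : Prop :=
  [/\ (forall a, inA i a -> inA i (d a)),
      (forall (c : k) a b, inA i a -> inA i b -> d (c *: a + b) = c *: d a + d b)
    & (forall a b, inA i a -> inA i b -> d (a * b) = d a * b + a * d b)].

Definition poisson_derivation_on (br : P -> P -> P) (i : nat) (d : P -> P) : Prop :=
  derivation_on i d /\
  (forall a b, inA i a -> inA i b -> d (br a b) = br (d a) b + br a (d b)).

Definition twisted_condition (br : P -> P -> P) (i : nat) (al de : P -> P) : Prop :=
  forall a b, inA i a -> inA i b ->
    de (br a b) = br (de a) b + br a (de b) + al a * de b - de a * al b.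

(* br makes k[x_1,...,x_n] the iterated Poisson polynomial algebra
   k[x_1][x_2;al_2,de_2]_p ... [x_n;al_n,de_n]_p  (0-indexed: variable 'X_i
   is adjoined to A_i with data al i, de i; for i = 0 the base k[x_1] is
   k[x_1; 0, 0]_p). *)
Definition iterated_ppa (br : P -> P -> P) (al de : 'I_n -> P -> P) : Prop :=
  poisson_bracket br /\
  forall i : 'I_n,
    [/\ (forall a b, inA i a -> inA i b -> inA i (br a b)),
        poisson_derivation_on br i (al i),
        derivation_on i (de i),
        twisted_condition br i (al i) (de i)
      & (forall b, inA i b -> br 'X_i b = al i b * 'X_i + de i b)].

(* The torus H = (k^x)^r, elements represented by h : 'I_r -> k, all nonzero. *)
Definition torus_elt (r : nat) (h : 'I_r -> k) : Prop := forall l, h l != 0.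

Definition character (r : nat) (m : 'I_r -> int) (h : 'I_r -> k) : k :=
  \prod_(l < r) h l ^ m l.

Definition eigen_of (r : nat) (act : ('I_r -> k) -> P -> P) (m : 'I_r -> int) (a : P) :=
  forall h, torus_elt h -> act h a = character m h *: a.

Definition rational_poisson_action (r : nat) (br : P -> P -> P)
    (act : ('I_r -> k) -> P -> P) : Prop :=
  [/\ (forall h, torus_elt h ->
        [/\ forall (c : k) a b, act h (c *: a + b) = c *: act h a + act h b,
            forall a b, act h (a * b) = act h a * act h b,
            act h 1 = 1,
            forall a b, act h (br a b) = br (act h a) (act h b)
          & bijective (act h)]),
      (forall a, act (fun _ => 1) a = a),
      (forall h g, torus_elt h -> torus_elt g ->
         forall a, act (fun l => h l * g l) a = act h (act g a))
    & (forall a, exists (N : nat) (ws : 'I_N -> 'I_r -> int) (as_ : 'I_N -> P),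
         a = \sum_(j < N) as_ j /\ forall j, eigen_of act (ws j) (as_ j))].

(* (eta | m): the eta-eigenvalue of elements of A_m, eta in h = k^r *)
Definition lie_pair (r : nat) (eta : 'I_r -> k) (m : 'I_r -> int) : k :=
  \sum_(l < r) eta l * (m l)%:~R.

End PoissonDefs.

(* Main.v *)
Require Import Defs.
From HB Require Import structures.
From mathcomp Require Import all_boot all_order all_algebra.
From mathcomp Require Import mpoly zify ring.
Import GRing.Theory.
Local Open Scope ring_scope.
Set Implicit Arguments. Unset Strict Implicit.

Definition goodm {n : nat} (i : nat) (m : 'X_{1..n}) : bool :=
  [forall j : 'I_n, (i <= j)%N ==> (m j == 0%N)].

Lemma inA_coef (k : fieldType) n i (p : {mpoly k[n]}) :
  inA i p -> forall m, ~~ goodm i m -> p@_m = 0.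
Proof.
move=> /allP H m Hm; apply/eqP; rewrite mcoeff_eq0; apply: contra Hm.
exact: H.
Qed.

Lemma coef_inA (k : fieldType) n i (p : {mpoly k[n]}) :
  (forall m, ~~ goodm i m -> p@_m = 0) -> inA i p.
Proof.
move=> H; apply/allP => m; rewrite mcoeff_msupp => Hm.
apply/negPn; apply: contra Hm => Hg; apply/eqP; exact: H.
Qed.

Lemma inA_lin (k : fieldType) n i (c : k) (a b : {mpoly k[n]}) :
  inA i a -> inA i b -> inA i (c *: a + b).
Proof.
move=> Ha Hb; apply: coef_inA => m Hm.
by rewrite mcoeffD mcoeffZ (inA_coef Ha Hm) (inA_coef Hb Hm) mulr0 addr0.
Qed.

Lemma inA0 (k : fieldType) n i : inA i (0 : {mpoly k[n]}).
Proof. by apply: coef_inA => m _; rewrite mcoeff0. Qed.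

Lemma inAX (k : fieldType) n i (m : 'X_{1..n}) : inA i ('X_[m] : {mpoly k[n]}) = goodm i m.
Proof. by rewrite /inA msuppX /= andbT. Qed.

Lemma lin_sum (k : fieldType) n (T : eqType) (S : pred {mpoly k[n]}) (F : {mpoly k[n]} -> {mpoly k[n]})
  (s : seq T) (c : T -> k) (x : T -> {mpoly k[n]}) :
  (forall c a b, S a -> S b -> F (c *: a + b) = c *: F a + F b) ->
  (forall c a b, S a -> S b -> S (c *: a + b)) -> S 0 ->
  (forall t, t \in s -> S (x t)) ->
  F (\sum_(t <- s) c t *: x t) = \sum_(t <- s) c t *: F (x t) /\ S (\sum_(t <- s) c t *: x t).
Proof.
move=> HF HS S0; elim: s => [|t s IH] Hx.
  rewrite !big_nil; split => //.
  have := HF 1 0 0 S0 S0; rewrite !scale1r addr0 -{1}[F 0]addr0 => e.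
  by rewrite -(@addrI _ (F 0) _ _ e).
have [IH1 IH2] := IH (fun u hu => Hx u (mem_behead (s:=t::s) hu)).
have Ht := Hx t (mem_head _ _).
rewrite !big_cons; split; last exact: HS.
by rewrite HF // IH1.
Qed.

Lemma character_ext (k : fieldType) r (a b : 'I_r -> int) (h : 'I_r -> k) :
  (forall l, a l = b l) -> character a h = character b h.
Proof. by move=> H; apply: eq_bigr => l _; rewrite H. Qed.

Lemma lie_pair_ext (k : fieldType) r (a b : 'I_r -> int) (e : 'I_r -> k) :
  (forall l, a l = b l) -> lie_pair e a = lie_pair e b.
Proof. by move=> H; apply: eq_bigr => l _; rewrite H. Qed.

Lemma characterD (k : fieldType) r (a b : 'I_r -> int) (h : 'I_r -> k) :
  torus_elt h -> character (fun l => a l + b l) h = character a h * character b h.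
Proof.
move=> Ht; rewrite /character -big_split /=; apply: eq_bigr => l _.
by rewrite expfzDr.
Qed.

Lemma character0 (k : fieldType) r (h : 'I_r -> k) : character (fun _ => 0) h = 1.
Proof. by rewrite /character big1. Qed.

Lemma lie_pairD (k : fieldType) r (a b : 'I_r -> int) (e : 'I_r -> k) :
  lie_pair e (fun l => a l + b l) = lie_pair e a + lie_pair e b.
Proof.
rewrite /lie_pair -big_split /=; apply: eq_bigr => l _.
by rewrite intrD mulrDr.
Qed.

Lemma lie_pair0 (k : fieldType) r (e : 'I_r -> k) : lie_pair e (fun _ => 0) = 0.
Proof. by rewrite /lie_pair big1 // => l _; rewrite mulr0. Qed.

Lemma two_pow_eq1 (k : fieldType) (m : nat) :
  [pchar k] =i pred0 -> (2 : k) ^+ m = 1 -> m = 0%N.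
Proof.
move=> /pcharf0P H e.
have : ((2 ^ m - 1)%N%:R == 0 :> k).
  by rewrite natrB ?expn_gt0 // natrX e subrr.
rewrite H subn_eq0 => h.
case: m e h => // m _; rewrite expnS.
have := expn_gt0 2 m; lia.
Qed.

Lemma two_powz_eq1 (k : fieldType) (z : int) :
  [pchar k] =i pred0 -> (2 : k) ^ z = 1 -> z = 0.
Proof.
move=> H; case: z => m.
  by move=> /(two_pow_eq1 H) ->.
rewrite NegzE -invr_expz => /eqP; rewrite invr_eq1 => /eqP.
by move=> /(two_pow_eq1 H).
Qed.

Lemma character_inj (k : fieldType) r (a b : 'I_r -> int) :
  [pchar k] =i pred0 ->
  (forall h : 'I_r -> k, torus_elt h -> character a h = character b h) ->
  forall l, a l = b l.
Proof.
move=> Hc H l.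
have two0 : (2 : k) != 0 by move/pcharf0P: Hc => Hc; rewrite (Hc 2%N).
pose h := fun l' : 'I_r => if l' == l then (2 : k) else 1.
have ht : torus_elt h.
  move=> l'; rewrite /h; case: (l' == l); [exact: two0 | exact: oner_neq0].
have ev c : character c h = 2 ^ c l.
  rewrite /character (bigD1 l) //= big1 ?mulr1 /h ?eqxx //.
  by move=> l' /negbTE ->; rewrite exp1rz.
have := H h ht; rewrite !ev => e.
have : (2 : k) ^ (a l - b l) = 1.
  apply: (mulIf (expfz_neq0 (b l) two0)).
  by rewrite -expfzDr // subrK mul1r e.
move/(two_powz_eq1 Hc)/eqP; rewrite subr_eq0 => /eqP //.
Qed.

Definition W (n r : nat) (w : 'I_n -> 'I_r -> int) (m : 'X_{1..n}) : 'I_r -> int :=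
  fun l => \sum_(j < n) (m j)%:Z * w j l.

Lemma W0 n r (w : 'I_n -> 'I_r -> int) l : W w 0%MM l = 0.
Proof. by rewrite /W big1 // => j _; rewrite mnm0E mul0r. Qed.

Lemma WD n r (w : 'I_n -> 'I_r -> int) m j l : W w (m + U_(j))%MM l = W w m l + w j l.
Proof.
have E : \sum_(j' < n) ((j == j')%N%:Z * w j' l) = w j l.
  rewrite (bigD1 j) //= eqxx mul1r big1 ?addr0 // => j' /negbTE.
  by rewrite eq_sym => ->; rewrite mul0r.
rewrite -E /W -big_split /=; apply: eq_bigr => j' _.
by rewrite mnmDE mnm1E PoszD mulrDl.
Qed.

Lemma mnm_ind n (Pm : 'X_{1..n} -> Prop) :
  Pm 0%MM -> (forall m j, Pm m -> Pm (m + U_(j))%MM) -> forall m, Pm m.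
Proof.
move=> H0 HS m; move: {2}(mdeg m) (erefl (mdeg m)) => d; elim: d m => [|d IH] m Hd.
  by move/eqP: Hd; rewrite mdeg_eq0 => /eqP ->.
have [j Hj] : exists j, m j != 0%N.
  apply/existsP; apply: contraT; rewrite negb_exists => /forallP Hm.
  suff : m = 0%MM by move=> e; move: Hd; rewrite e mdeg0.
  by apply/mnmP => j; rewrite mnm0E; move/negPn/eqP: (Hm j).
rewrite -(submK (m := U_(j)) (m' := m)); last by rewrite lep1mP.
apply: HS; apply: IH.
move: Hd; rewrite -{1}(submK (m := U_(j)) (m' := m)) ?lep1mP // mdegD mdeg1 addn1.
by case.
Qed.

Lemma goodm_ind n i (Pm : 'X_{1..n} -> Prop) :
  Pm 0%MM -> (forall m (j : 'I_n), goodm i m -> (j < i)%N -> Pm m -> Pm (m + U_(j))%MM) ->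
  forall m, goodm i m -> Pm m.
Proof.
move=> H0 HS; apply: mnm_ind => // m j IH Hg.
have Hm : goodm i m.
  apply/forallP => j'; apply/implyP => hj; move/forallP: Hg => /(_ j') /implyP /(_ hj).
  by rewrite mnmDE addn_eq0 => /andP [].
apply: HS => //; last exact: IH.
rewrite ltnNge; apply/negP => hj; move/forallP: Hg => /(_ j) /implyP /(_ hj).
by rewrite mnmDE mnm1E eqxx addn1.
Qed.

Lemma goodm0 n i : goodm i (0%MM : 'X_{1..n}).
Proof. by apply/forallP => j; rewrite mnm0E eqxx implybT. Qed.

Lemma goodmU n i (j : 'I_n) : (j < i)%N -> goodm i U_(j)%MM.
Proof.
move=> hj; apply/forallP => j'; apply/implyP => hj'; rewrite mnm1E.
have : j != j' by apply/eqP => e; move: hj hj'; rewrite e; lia.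
by move/negbTE ->.
Qed.

Lemma act_X (k : fieldType) n r br (act : ('I_r -> k) -> {mpoly k[n]} -> {mpoly k[n]}) w :
  rational_poisson_action br act -> (forall i : 'I_n, eigen_of act (w i) 'X_i) ->
  forall h, torus_elt h -> forall m, act h 'X_[m] = character (W w m) h *: 'X_[m].
Proof.
move=> [Hact _ _ _] HX h ht; have [_ Hmul H1 _ _] := Hact h ht.
elim/mnm_ind => [|m j IH].
  rewrite mpolyX0 H1 (@character_ext _ _ (W w 0%MM) (fun _ => 0)); last exact: W0.
  by rewrite character0 scale1r.
rewrite mpolyXD Hmul IH HX // (@character_ext _ _ (W w (m + U_(j))%MM) (fun l => W w m l + w j l)); last exact: WD.
by rewrite characterD // -scalerAl -scalerAr scalerA.
Qed.

Lemma al_X (k : fieldType) n br (al de : 'I_n -> {mpoly k[n]} -> {mpoly k[n]}) r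
   (w : 'I_n -> 'I_r -> int) (eta : 'I_n -> 'I_r -> k) :
  iterated_ppa br al de ->
  (forall i j : 'I_n, (j < i)%N -> al i 'X_j = lie_pair (eta i) (w j) *: 'X_j) ->
  forall (i : 'I_n) m, goodm i m -> al i 'X_[m] = lie_pair (eta i) (W w m) *: 'X_[m].
Proof.
move=> [_ Hi] Hal i; have [_ [[Hin Hlin Hmul] _] _ _ _] := Hi i.
apply: goodm_ind => [|m j Hg hj IH].
  rewrite (@lie_pair_ext _ _ (W w 0%MM) (fun _ => 0)); last exact: W0.
  rewrite lie_pair0 scale0r mpolyX0.
  have I1 : inA i (1 : {mpoly k[n]}) by rewrite -mpolyX0 inAX goodm0.
  have := Hmul 1 1 I1 I1; rewrite !mulr1 mul1r -{1}[al i 1]addr0 => e.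
  by rewrite -(@addrI _ (al i 1) _ _ e).
have Im : inA i ('X_[m] : {mpoly k[n]}) by rewrite inAX.
have Ij : inA i ('X_j : {mpoly k[n]}) by rewrite inAX goodmU.
rewrite mpolyXD Hmul // IH Hal // (@lie_pair_ext _ _ (W w (m + U_(j))%MM) (fun l => W w m l + w j l)); last exact: WD.
by rewrite lie_pairD scalerDl -scalerAl -scalerAr.
Qed.

Lemma coef_sumf (k : fieldType) n (p : {mpoly k[n]}) (f : 'X_{1..n} -> k) mu :
  (\sum_(nu <- msupp p) (p@_nu * f nu) *: 'X_[nu])@_mu = p@_mu * f mu.
Proof.
rewrite (big_morph (mcoeff mu) (@mcoeffD _ _ mu) (mcoeff0 _ mu)).
under eq_bigr => nu _ do rewrite mcoeffZ mcoeffX.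
case: (boolP (mu \in msupp p)) => hm.
  rewrite (bigD1_seq mu) ?msupp_uniq //= eqxx mulr1 big1 ?addr0 //.
  by move=> nu /negbTE ->; rewrite mulr0.
rewrite big1_seq; first by rewrite (memN_msupp_eq0 hm) mul0r.
move=> nu /andP [_ hnu]; case: eqP => [e|]; last by rewrite mulr0.
by move: hm; rewrite -e hnu.
Qed.

Lemma inA_good (k : fieldType) n i (p : {mpoly k[n]}) nu :
  inA i p -> nu \in msupp p -> goodm i nu.
Proof. by move/allP; apply. Qed.

Lemma al_eigen (k : fieldType) n r br (al de : 'I_n -> {mpoly k[n]} -> {mpoly k[n]})
   (act : ('I_r -> k) -> {mpoly k[n]} -> {mpoly k[n]})
   (w : 'I_n -> 'I_r -> int) (eta : 'I_n -> 'I_r -> k) :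
  [pchar k] =i pred0 ->
  iterated_ppa br al de ->
  rational_poisson_action br act ->
  (forall i : 'I_n, eigen_of act (w i) 'X_i) ->
  (forall i j : 'I_n, (j < i)%N -> al i 'X_j = lie_pair (eta i) (w j) *: 'X_j) ->
  forall (i : 'I_n) (p : {mpoly k[n]}) m', inA i p ->
  (forall h, torus_elt h -> act h p = character m' h *: p) ->
  al i p = lie_pair (eta i) m' *: p.
Proof.
move=> Hc Hppa Hrat HX Hal i p m' Hp Heig.
have Hw : forall nu, nu \in msupp p -> forall l, W w nu l = m' l.
  move=> nu hnu; apply: character_inj Hc _ => h ht.
  have [Hact _ _ _] := Hrat; have [Hlin0 _ _ _ _] := Hact h ht.
  have E : act h p = \sum_(nu <- msupp p) (p@_nu * character (W w nu) h) *: 'X_[nu].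
    rewrite {1}(mpolyE p).
    have [-> _] := @lin_sum _ _ _ predT (act h) (msupp p) (fun nu => p@_nu) (fun nu => 'X_[nu])
      (fun c a b _ _ => Hlin0 c a b) (fun _ _ _ _ _ => isT) isT (fun _ _ => isT).
    by apply: eq_bigr => nu' _; rewrite (act_X Hrat HX ht) scalerA.
  have := congr1 (mcoeff nu) E; rewrite coef_sumf Heig // mcoeffZ mulrC.
  by move=> e; apply/esym; apply: (mulfI _ e); rewrite -mcoeff_msupp.
have HXg : forall nu, nu \in msupp p -> inA i ('X_[nu] : {mpoly k[n]}).
  by move=> nu hnu; rewrite inAX; exact: inA_good Hp hnu.
have [_ Hi] := Hppa; have [_ [[Hin Hlin Hmul] _] _ _ _] := Hi i.
rewrite {1}(mpolyE p).
have [-> _] := @lin_sum _ _ _ (inA i) (al i) (msupp p) (fun nu => p@_nu) (fun nu => 'X_[nu])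
   Hlin (fun c a b => @inA_lin _ _ i c a b) (@inA0 _ _ i) HXg.
rewrite {3}(mpolyE p) scaler_sumr; apply: eq_big_seq => nu hnu.
rewrite (al_X Hppa Hal (inA_good Hp hnu)) (lie_pair_ext _ (Hw nu hnu)).
by rewrite !scalerA mulrC.
Qed.

Lemma lin0 (k : fieldType) n (S : pred {mpoly k[n]}) (F : {mpoly k[n]} -> {mpoly k[n]}) :
  (forall c a b, S a -> S b -> F (c *: a + b) = c *: F a + F b) -> S 0 -> F 0 = 0.
Proof.
move=> HF S0; have := HF 1 0 0 S0 S0; rewrite !scale1r addr0 -{1}[F 0]addr0 => e.
by rewrite -(@addrI _ (F 0) _ _ e).
Qed.

Lemma linZ (k : fieldType) n (S : pred {mpoly k[n]}) (F : {mpoly k[n]} -> {mpoly k[n]}) c a :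
  (forall c a b, S a -> S b -> F (c *: a + b) = c *: F a + F b) -> S 0 -> S a ->
  F (c *: a) = c *: F a.
Proof.
move=> HF S0 Sa; have := HF c a 0 Sa S0; rewrite addr0 (lin0 HF S0) addr0 //.
Qed.

Lemma mono_id (k : fieldType) n r br (al de : 'I_n -> {mpoly k[n]} -> {mpoly k[n]})
   (act : ('I_r -> k) -> {mpoly k[n]} -> {mpoly k[n]})
   (w : 'I_n -> 'I_r -> int) (eta : 'I_n -> 'I_r -> k) :
  [pchar k] =i pred0 ->
  iterated_ppa br al de ->
  rational_poisson_action br act ->
  (forall i : 'I_n, eigen_of act (w i) 'X_i) ->
  (forall i j : 'I_n, (j < i)%N -> al i 'X_j = lie_pair (eta i) (w j) *: 'X_j) ->
  forall (i : 'I_n) mu, goodm i mu ->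
  al i (de i 'X_[mu]) = de i (al i 'X_[mu]) + lie_pair (eta i) (w i) *: de i 'X_[mu].
Proof.
move=> Hc Hppa Hrat HX Hal i mu Hg.
have [[Hbl Hbr _ _ _] Hi] := Hppa; have [_ _ [Hdin Hdlin _] _ HXb] := Hi i.
have Imu : inA i ('X_[mu] : {mpoly k[n]}) by rewrite inAX.
have ID : inA i (de i 'X_[mu]) by apply: Hdin.
have E : forall h, torus_elt h ->
    act h (de i 'X_[mu]) = character (fun l => W w mu l + w i l) h *: de i 'X_[mu].
  move=> h ht; have [Hact _ _ _] := Hrat; have [Hlin Hmul _ Hbra _] := Hact h ht.
  have HL : forall c a b, predT a -> predT b -> act h (c *: a + b) = c *: act h a + act h b.
    by move=> c a b _ _; exact: Hlin.
  have actZ c a : act h (c *: a) = c *: act h a.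
    have := @linZ _ _ predT (act h) c a HL isT isT. done.
  have actB a b : act h (a - b) = act h a - act h b.
    by rewrite -[a - b]addrC -scaleN1r Hlin scaleN1r addrC.
  have BL : forall d, forall c a b, true -> true -> (br^~ d) (c *: a + b) = c *: (br^~ d) a + (br^~ d) b.
    by move=> d c a b _ _; exact: Hbl.
  have BR : forall d, forall c a b, true -> true -> br d (c *: a + b) = c *: br d a + br d b.
    by move=> d c a b _ _; exact: Hbr.
  have brZl c a d : br (c *: a) d = c *: br a d by exact: (@linZ _ _ predT (br^~ d) c a (BL d) isT isT).
  have brZr c a d : br d (c *: a) = c *: br d a by exact: (@linZ _ _ predT (br d) c a (BR d) isT isT).
  have Hde : de i 'X_[mu] = br 'X_i 'X_[mu] - al i 'X_[mu] * 'X_i.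
    by rewrite HXb // addrC addKr.
  rewrite Hde actB Hbra Hmul HX // (act_X Hrat HX ht) brZl brZr.
  rewrite (al_X Hppa Hal Hg) -scalerAl actZ -mpolyXD (act_X Hrat HX ht).
  idtac.
  rewrite characterD // mpolyXD.
  rewrite -!mul_mpolyC; ring.
rewrite (al_eigen Hc Hppa Hrat HX Hal ID E) lie_pairD (al_X Hppa Hal Hg).
rewrite (@linZ _ _ (inA i) (de i) _ _ Hdlin (@inA0 _ _ i) Imu).
by rewrite scalerDl.
Qed.

Theorem lemma4p2 (k : fieldType) (n r : nat)
    (br : {mpoly k[n]} -> {mpoly k[n]} -> {mpoly k[n]})
    (al de : 'I_n -> {mpoly k[n]} -> {mpoly k[n]})
    (act : ('I_r -> k) -> {mpoly k[n]} -> {mpoly k[n]})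
    (w : 'I_n -> 'I_r -> int) (eta : 'I_n -> 'I_r -> k) :
  [pchar k] =i pred0 ->
  iterated_ppa br al de ->
  rational_poisson_action br act ->
  (forall i : 'I_n, eigen_of act (w i) 'X_i) ->
  (forall i j : 'I_n, (j < i)%N -> al i 'X_j = lie_pair (eta i) (w j) *: 'X_j) ->
  (forall i : 'I_n, lie_pair (eta i) (w i) != 0) ->
  forall (i : 'I_n) (b : {mpoly k[n]}), inA i b ->
    al i (de i b) = de i (al i b) + lie_pair (eta i) (w i) *: de i b.
Proof.
move=> Hc Hppa Hrat HX Hal _ i b Hb.
set s := lie_pair (eta i) (w i).
have [_ Hi] := Hppa; have [_ [[Hain Halin _] _] [Hdin Hdlin _] _ _] := Hi i.
pose F x := al i (de i x) - de i (al i x) - s *: de i x.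
have HF : forall c x y, inA i x -> inA i y -> F (c *: x + y) = c *: F x + F y.
  move=> c x y Hx Hy; rewrite /F Hdlin // Halin ?Hdin // Halin // Hdlin ?Hain //.
  rewrite -!mul_mpolyC; ring.
have HXg : forall nu, nu \in msupp b -> inA i ('X_[nu] : {mpoly k[n]}).
  by move=> nu hnu; rewrite inAX; exact: inA_good Hb hnu.
have [E _] := @lin_sum _ _ _ (inA i) F (msupp b) (fun nu => b@_nu) (fun nu => 'X_[nu])
   HF (fun c a b => @inA_lin _ _ i c a b) (@inA0 _ _ i) HXg.
have : F b = 0.
  rewrite {1}(mpolyE b) E big1_seq // => nu /andP [_ hnu].
  rewrite /F (mono_id Hc Hppa Hrat HX Hal (inA_good Hb hnu)) -/s.
  by rewrite -!mul_mpolyC; ring.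
by rewrite /F => /eqP; rewrite subr_eq0 subr_eq addrC => /eqP.
Qed.
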